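(* Let $q$ be a prime power, $b$ a positive integer, and $M,D$ positive integers with $M>q^{b-1}$ and $D\ge b$. Then $N_b(M,D)\le N_H(M,D-b+1)$.
   Context: For $\boldsymbol{z}=(z_0,\ldots,z_{n-1}),\boldsymbol{w}\in\mathbb{F}_q^n$, $d_b(\boldsymbol{z},\boldsymbol{w})$ is the number of $i\in\{0,\ldots,n-1\}$ with $(z_i,\ldots,z_{i+b-1})\ne(w_i,\ldots,w_{i+b-1})$ (indices mod $n$). $N_b(M,D)$ is the smallest $r$ such that there exist $\boldsymbol{p}_1,\ldots,\boldsymbol{p}_M\in\mathbb{F}_q^r$ with $d_b(\boldsymbol{p}_i,\boldsymbol{p}_j)\ge D$ for all $i\ne j$; $N_H(M,D)$ is defined the same way with the Hamming distance $d_H$ in place of $d_b$. *)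

(* Defs.v *)
From Stdlib Require Import ClassicalEpsilon.
From mathcomp Require Import all_boot all_algebra all_field.
Set Implicit Arguments. Unset Strict Implicit. Unset Printing Implicit Defensive.

Lemma shift_lt n (i : 'I_n) (k : nat) : (i + k) %% n < n.
Proof. by apply: ltn_pmod; apply: leq_ltn_trans (ltn_ord i). Qed.

Definition shift n (i : 'I_n) (k : nat) : 'I_n := Ordinal (shift_lt i k).

Definition dist_b (F : finFieldType) (b n : nat) (z w : {ffun 'I_n -> F}) : nat :=
  #|[set i : 'I_n | [exists k : 'I_b, z (shift i k) != w (shift i k)]]|.

Definition dist_H (F : finFieldType) (n : nat) (z w : {ffun 'I_n -> F}) : nat :=
  #|[set i : 'I_n | z i != w i]|.

Definition has_code (F : finFieldType)
    (dist : forall n, {ffun 'I_n -> F} -> {ffun 'I_n -> F} -> nat)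
    (M D r : nat) : bool :=
  [exists c : {ffun 'I_M -> {ffun 'I_r -> F}},
     [forall i : 'I_M, [forall j : 'I_M, (i != j) ==> (D <= dist r (c i) (c j))]]].

(* smallest n with P n (0 by convention if there is none) *)
Definition Nmin (P : pred nat) : nat :=
  match excluded_middle_informative (exists n, P n) with
  | left h => ex_minn h
  | right _ => 0
  end.

Definition N_b (F : finFieldType) (b M D : nat) : nat :=
  Nmin (fun r => has_code (fun n => @dist_b F b n) M D r).

Definition N_H (F : finFieldType) (M D : nat) : nat :=
  Nmin (fun r => has_code (fun n => @dist_H F n) M D r).

(* Main.v *)
Require Import Defs.
From Stdlib Require Import ClassicalEpsilon.
From mathcomp Require Import all_boot all_algebra all_field.
From mathcomp Require Import zify.
Set Implicit Arguments. Unset Strict Implicit. Unset Printing Implicit Defensive.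
Import GRing.Theory.

Lemma shift0 n (i : 'I_n) : shift i 0 = i.
Proof. by apply/val_inj; rewrite /= addn0 modn_small. Qed.

Lemma shiftS n (i : 'I_n) k : shift (shift i 1) k = shift i k.+1.
Proof. by apply/val_inj; rewrite /= modnDml -addnA add1n. Qed.

Definition Bset n (S : {set 'I_n}) k :=
  [set i : 'I_n | [exists j : 'I_k, shift i j \in S]].

Lemma BsetS n (S : {set 'I_n}) k : 0 < k ->
  Bset S k.+1 = Bset S k :|: [set i | shift i 1 \in Bset S k].
Proof.
move=> hk; apply/setP => i; rewrite !inE; apply/existsP/orP.
- case=> j Hj; case: (ltnP j k) => hjk.
    by left; apply/existsP; exists (Ordinal hjk).
  right; rewrite ?inE; apply/existsP.
  have hl : k.-1 < k by lia.
  exists (Ordinal hl); rewrite shiftS /=.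
  have -> : k.-1.+1 = j by have := ltn_ord j; lia.
  exact: Hj.
- case.
    by case/existsP => j Hj; exists (widen_ord (leqnSn k) j).
  rewrite ?inE => /existsP [j Hj].
  have hl : j.+1 < k.+1 by rewrite ltnS.
  by exists (Ordinal hl); rewrite /= -shiftS.
Qed.

Lemma closed_full n (A : {set 'I_n}) a : a \in A ->
  (forall i, shift i 1 \in A -> i \in A) -> A = setT.
Proof.
move=> aA hA.
have H : forall m i, shift i m \in A -> i \in A.
  elim=> [|m IH] i; first by rewrite shift0.
  by rewrite -shiftS => /IH; apply: hA.
apply/setP => i; rewrite inE; apply: (H (a + n - i)).
have -> : shift i (a + n - i) = a.
  apply/val_inj => /=.
  have -> : i + (a + n - i) = a + n by have := ltn_ord i; lia.
  by rewrite modnDr modn_small.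
exact: aA.
Qed.

Lemma S_sub_B n (S : {set 'I_n}) k : 0 < k -> S \subset Bset S k.
Proof.
move=> hk; apply/subsetP => i iS; rewrite inE; apply/existsP.
by exists (Ordinal hk); rewrite /= shift0.
Qed.

Lemma Bset_grow n (S : {set 'I_n}) k : 0 < k -> S != set0 ->
  minn n (#|S| + k.-1) <= #|Bset S k|.
Proof.
elim: k => [//|k IH] _ hS.
case: (posnP k) => [->|hk].
  rewrite addn0; apply: leq_trans (geq_minr _ _) _.
  exact: subset_leq_card (S_sub_B S (ltn0Sn 0)).
rewrite BsetS //.
set A := Bset S k.
case: (A =P setT) => [EA|NA].
  rewrite EA setTU cardsT card_ord; exact: geq_minl.
have hIH := IH hk hS.
have hp : A \proper A :|: [set i | shift i 1 \in A].
  rewrite properE subsetUl /=; apply/negP => hsub; apply: NA.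
  case/set0Pn: hS => a aS.
  apply: (closed_full (a := a)).
    exact: (subsetP (S_sub_B S hk)).
  move=> i hi; apply: (subsetP hsub); rewrite in_setU; apply/orP; right; rewrite inE; exact: hi.
have := proper_card hp.
rewrite /A in hIH * => hpc; simpl in *; move: hIH hpc; rewrite -/(Bset S k); lia.
Qed.

Lemma dist_b_B (F : finFieldType) b n (x y : {ffun 'I_n -> F}) :
  dist_b b x y = #|Bset [set i | x i != y i] b|.
Proof.
rewrite /dist_b /Bset; apply: eq_card => i; rewrite !inE.
by apply: eq_existsb => j; rewrite inE.
Qed.

Lemma len_bound (F : finFieldType) b M D' n (c : 'I_M -> {ffun 'I_n -> F}) :
  0 < D' -> (forall i j, i != j -> D' <= dist_H (c i) (c j)) ->
  n < D' + b.-1 -> M <= #|F| ^ b.-1.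
Proof.
move=> hD hc hn.
pose proj := fun x : {ffun 'I_n -> F} =>
  [ffun k : 'I_b.-1 => odflt (0%R : F) (omap x (insub (val k) : option 'I_n))].
have inj : injective (fun i => proj (c i)).
  move=> i j E; apply/eqP/negPn/negP => nij.
  have := hc i j nij; rewrite /dist_H.
  pose L := [set t : 'I_n | t < b.-1].
  have sub : [set t | c i t != c j t] \subset ~: L.
    apply/subsetP => t; rewrite !inE; apply: contra => tl.
    move/ffunP: E => /(_ (Ordinal tl)).
    by rewrite /proj /= !ffunE /= (valK t) /= => ->.
  have hL : minn n b.-1 <= #|L|.
    have hm : minn n b.-1 <= n by exact: geq_minl.
    have injw : injective (widen_ord hm).
      by move=> u v /(congr1 val) /= /val_inj.
    rewrite -{1}(card_ord (minn n b.-1)) -cardsT -(card_imset _ injw).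
    apply: subset_leq_card; apply/subsetP => t /imsetP [u _ ->].
    rewrite inE /=; have := ltn_ord u; lia.
  have h1 := subset_leq_card sub.
  have h2 := cardsC L; rewrite card_ord in h2.
  move=> hh; have := leq_trans hh h1; move: h2 hL hn hD; lia.
have := leq_card _ inj; rewrite card_ffun !card_ord; exact.
Qed.

Lemma H_exists (F : finFieldType) M D' :
  exists r, has_code (fun n => @dist_H F n) M D' r.
Proof.

exists #|{: 'I_M * 'I_D'}|.
pose c := [ffun i : 'I_M => [ffun j : 'I_#|{: 'I_M * 'I_D'}| =>
            (if (enum_val j).1 == i then 1%R else 0%R : F)]].
apply/existsP; exists c; apply/forallP => i; apply/forallP => j.
apply/implyP => nij; rewrite /dist_H.
have injk : injective (fun k : 'I_D' => enum_rank ((i, k) : 'I_M * 'I_D')).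
  by move=> u v /enum_rank_inj [].
rewrite -{1}(card_ord D') -cardsT -(card_imset _ injk).
apply: subset_leq_card; apply/subsetP => t /imsetP [u _ ->].
rewrite inE /c !ffunE enum_rankK /= eqxx (negbTE nij).
exact: oner_neq0.
Qed.

Theorem lemma4p5 (F : finFieldType) (b M D : nat) :
  0 < b -> 0 < M -> 0 < D ->
  #|F| ^ b.-1 < M -> b <= D ->
  N_b F b M D <= N_H F M (D - b + 1).
Proof.
move=> hb hM hD hq hbD.
rewrite /N_H /Nmin.
case: excluded_middle_informative => [h|nh]; last first.
  by exfalso; apply: nh; apply: H_exists.
case: ex_minnP => r hr _.
move/existsP: hr => [c hc].
have hcH : forall i j, i != j -> D - b + 1 <= dist_H (c i) (c j).
  by move=> i j nij; have := forallP (forallP hc i) j; rewrite nij.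
have hlen : D <= r.
  rewrite leqNgt; apply/negP => hr.
  have := len_bound (b := b) (D' := D - b + 1) (c := fun i => c i) _ hcH.
  have -> : M <= #|F| ^ b.-1 = false by apply/negbTE; rewrite -ltnNge.
  move=> H; have h0 : 0 < D - b + 1 by lia.
  have := H h0; lia.
have hcb : has_code (fun n => @dist_b F b n) M D r.
  apply/existsP; exists c; apply/forallP => i; apply/forallP => j.
  apply/implyP => nij; have hH := hcH i j nij.
  rewrite dist_b_B.
  have hne : [set t | c i t != c j t] != set0.
    by rewrite -card_gt0; apply: leq_trans _ hH; rewrite addn1.
  apply: leq_trans _ (Bset_grow hb hne); rewrite leq_min hlen /=.
  apply: leq_trans _ (leq_add hH (leqnn b.-1)).
  rewrite -addnA; have -> : 1 + b.-1 = b by rewrite add1n prednK.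
  by rewrite subnK.
rewrite /N_b /Nmin.
case: excluded_middle_informative => [h'|//].
case: ex_minnP => r' _ hmin; exact: hmin _ hcb.
Qed.
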